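(* Let $\{M_i(t_i),t_i\ge0\}$, $i=1,\dots,d$, be independent one-parameter integrable processes, let $\mathcal{F}^{(i)}(t_i)=\sigma(M_i(s_i):s_i\le t_i)$ and $\mathcal{F}(\mathbf{t})=\bigvee_{i=1}^d\mathcal{F}^{(i)}(t_i)$ for $\mathbf{t}=(t_1,\dots,t_d)\in\mathbb{R}^d_+$. The following are equivalent: (i) $\{\sum_{i=1}^dM_i(t_i),\mathbf{t}\in\mathbb{R}^d_+\}$ is a $d$-parameter $\{\mathcal{F}(\mathbf{t})\}$-martingale and, for each $i$, $\mathbb{E}M_i(s_i)=\mathbb{E}M_i(t_i)$ for all $s_i,t_i\ge0$; (ii) for every $1\le d'\le d$, $\{\sum_{i=1}^{d'}M_i(t_i),(t_1,\dots,t_{d'})\in\mathbb{R}^{d'}_+\}$ is a $d'$-parameter martingale with respect to $\mathcal{F}'(t_1,\dots,t_{d'})=\bigvee_{i=1}^{d'}\mathcal{F}^{(i)}(t_i)$; (iii) for each $i=1,\dots,d$, $\{M_i(t_i),t_i\ge0\}$ is a one-parameter martingale with respect to its natural filtration.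
   Context: $\mathbb{R}^d_+$ carries the componentwise order $\preceq$. A $d$-parameter filtration is a family $\{\mathcal{F}(\mathbf{t})\}$ of complete sub-$\sigma$-fields with $\mathcal{F}(\mathbf{s})\subseteq\mathcal{F}(\mathbf{t})$ for $\mathbf{s}\preceq\mathbf{t}$. A $d$-parameter martingale is an integrable adapted process $M(\mathbf{t})$ with $\mathbb{E}(M(\mathbf{t})\mid\mathcal{F}(\mathbf{s}))=M(\mathbf{s})$ a.s. whenever $\mathbf{s}\preceq\mathbf{t}$. *)

(* Defs.v *)
From HB Require Import structures.
From mathcomp Require Import all_boot all_order all_algebra.
From mathcomp Require Import all_classical all_reals all_analysis.
Set Implicit Arguments. Unset Strict Implicit. Unset Printing Implicit Defensive.
Import Order.TTheory GRing.Theory Num.Theory.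
Local Open Scope classical_set_scope.
Local Open Scope ring_scope.

Section defs.
Context {d0 : measure_display} {T : measurableType d0} {R : realType}.

Definition measurable_wrt (G : set (set T)) (X : T -> R) : Prop :=
  forall B : set R, measurable B -> G (X @^-1` B).

Definition sjoin (n : nat) (G : 'I_n -> set (set T)) : set (set T) :=
  <<s \bigcup_(i in [set: 'I_n]) G i >>.

Definition natF (X : R -> T -> R) (t : R) : set (set T) :=
  <<s \bigcup_(s in `[0, t]) preimage_set_system setT (X s) measurable >>.

Definition procF (X : R -> T -> R) : set (set T) :=
  <<s \bigcup_(s in `[0, +oo[) preimage_set_system setT (X s) measurable >>.

Definition pos_param (n : nat) (t : 'I_n -> R) : Prop := forall i, 0 <= t i.
Definition cwle (n : nat) (s t : 'I_n -> R) : Prop := forall i, s i <= t i.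

(* n-parameter martingale with respect to filtration F on R^n_+:
   integrable, adapted, and E(X t | F s) = X s a.s. for s <= t, the latter
   written out via the defining property of conditional expectation. *)
Definition nparam_martingale (P : probability T R) (n : nat)
    (F : ('I_n -> R) -> set (set T)) (X : ('I_n -> R) -> T -> R) : Prop :=
  (forall t, pos_param t -> P.-integrable setT (EFin \o X t)) /\
  (forall t, pos_param t -> measurable_wrt (F t) (X t)) /\
  (forall s t, pos_param s -> pos_param t -> cwle s t ->
     forall A, F s A ->
       (\int[P]_(w in A) (X t w)%:E = \int[P]_(w in A) (X s w)%:E)%E).

Definition martingale1 (P : probability T R)
    (F : R -> set (set T)) (X : R -> T -> R) : Prop :=
  (forall t, 0 <= t -> P.-integrable setT (EFin \o X t)) /\
  (forall t, 0 <= t -> measurable_wrt (F t) (X t)) /\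
  (forall s t, 0 <= s -> s <= t ->
     forall A, F s A ->
       (\int[P]_(w in A) (X t w)%:E = \int[P]_(w in A) (X s w)%:E)%E).

Definition indep_processes (P : probability T R) (n : nat)
    (M : 'I_n -> R -> T -> R) : Prop :=
  forall A : 'I_n -> set T, (forall i, procF (M i) (A i)) ->
    P (\bigcap_(i in [set: 'I_n]) A i) = (\prod_(i < n) P (A i))%E.

End defs.

(* Main.v *)
Require Import Defs.
From HB Require Import structures.
From mathcomp Require Import all_boot all_order all_algebra.
From mathcomp Require Import all_classical all_reals all_analysis.
From mathcomp Require Import measurable_realfun.
Import Order.TTheory GRing.Theory Num.Theory.
Local Open Scope classical_set_scope.
Local Open Scope ring_scope.


Section aux.
Context {d0 : measure_display} {T : measurableType d0} {R : realType}.
Variable P : probability T R.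

Lemma int_mfun (f : T -> R) : P.-integrable setT (EFin \o f) -> measurable_fun setT f.
Proof. by move=> /(measurable_int P) /measurable_EFinP. Qed.

Lemma gen_meas (X : R -> T -> R) (I : set R) :
  (forall s, I s -> measurable_fun setT (X s)) ->
  <<s \bigcup_(s in I) preimage_set_system setT (X s) measurable >> `<=` measurable.
Proof.
move=> mX; apply: smallest_sub; first exact: sigma_algebra_measurable.
move=> A [s Is] [B mB <-]; exact: mX.
Qed.

Lemma sigmaT (G : set (set T)) : <<s G >> setT.
Proof. exact: (@measurableT _ (g_sigma_algebraType G)). Qed.

Lemma sigmaI (G : set (set T)) A B : <<s G >> A -> <<s G >> B -> <<s G >> (A `&` B).
Proof. exact: (@measurableI _ (g_sigma_algebraType G)). Qed.

Lemma natF_adapted (X : R -> T -> R) t : 0 <= t -> measurable_wrt (natF X t) (X t).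
Proof.
move=> t0 B mB; apply: sub_gen_smallest; exists t; first by rewrite /= in_itv /= t0 lexx.
by exists B => //; rewrite setTI.
Qed.

Lemma natF_procF (X : R -> T -> R) t : natF X t `<=` procF X.
Proof.
apply: smallest_sub; first exact: smallest_sigma_algebra.
move=> A [s]; rewrite /= in_itv /= => /andP[s0 _] HA; apply: sub_gen_smallest.
by exists s => //; rewrite /= in_itv /= s0.
Qed.

Lemma mwrt_sum n (G : set (set T)) (f : 'I_n -> T -> R) :
  (forall i, measurable_wrt <<s G >> (f i)) ->
  measurable_wrt <<s G >> (fun w => \sum_(i < n) f i w).
Proof.
move=> mf B mB.
have : measurable_fun (setT : set (g_sigma_algebraType G)) (fun w => \sum_(i < n) f i w).
  apply: measurable_sum => i _ Y mY; rewrite setTI; exact: mf.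
by move=> /(_ measurableT B mB); rewrite setTI.
Qed.

Local Open Scope ereal_scope.

Lemma integral_mrestr d (T' : measurableType d) (mu : {measure set T' -> \bar R})
  (B D : set T') (mB : measurable B) (mD : measurable D) (f : T' -> \bar R) :
  measurable_fun D f ->
  \int[mrestr mu mB]_(x in D) f x = \int[mu]_(x in D `&` B) f x.
Proof.
move=> mf.
have mDB : measurable (D `&` B) by exact: measurableI.
have mDnB : measurable (D `\` B) by exact: measurableD.
rewrite -{1}(setUIDK D B) integral_setU //; last 2 first.
  - by rewrite setUIDK.
  - by apply/disj_set2P; rewrite setDE setIACA setICr setI0.
transitivity (\int[mu]_(x in D `&` B) f x + \int[mzero]_(x in D `\` B) f x).
  congr (_ + _); apply: eq_measure_integral => A mA AD /=.
  - by rewrite /mrestr setIidl // => x /AD [].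
  - rewrite /mrestr /mzero.
    have -> : A `&` B = set0 by apply/seteqP; split => x // [/AD [_ nB] Bx].
    exact: measure0.
by rewrite integral_measure_zero adde0.
Qed.

End aux.


Section factorE.
Context {d0 : measure_display} {T : measurableType d0} {R : realType}.
Variable P : probability T R.
Variable Gen : set (set T).
Local Notation TG := (g_sigma_algebraType Gen).

Lemma mid (hG : <<s Gen >> `<=` measurable) : measurable_fun setT (id : T -> TG).
Proof. by move=> _ A mA; rewrite setTI; exact: hG. Qed.

Section subr.
Variables (hG : <<s Gen >> `<=` measurable) (S : set T) (mS : measurable S).
Definition subr (_ : <<s Gen >> `<=` measurable) (_ : measurable S) (A : set TG) : \bar R :=
  P (A `&` S).
Let subr0 : subr hG mS set0 = 0%E. Proof. by rewrite /subr set0I measure0. Qed.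
Let subr_ge0 A : (0 <= subr hG mS A)%E. Proof. exact: measure_ge0. Qed.
Let subr_sa : semi_sigma_additive (subr hG mS).
Proof.
move=> F mF tF mU; rewrite /subr setI_bigcupl.
pose FS i : set T := F i `&` S.
have mFS i : measurable (FS i) by apply: measurableI => //; apply: hG; exact: mF.
have tFS : trivIset setT FS.
  apply/trivIsetP => i j _ _ ij.
  move/trivIsetP : tF => /(_ i j Logic.I Logic.I ij).
  by rewrite /FS setIACA => ->; rewrite set0I.
exact: measure_sigma_additive.
Qed.
HB.instance Definition _ := isMeasure.Build _ _ _ (subr hG mS)
  subr0 subr_ge0 subr_sa.
End subr.

Local Open Scope ereal_scope.

Lemma factor_ge0 (hG : <<s Gen >> `<=` measurable) (B : set T) (mB : measurable B)
  (hB : forall C, <<s Gen >> C -> P (C `&` B) = P C * P B)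
  (Y : T -> \bar R) (D : set T) :
  <<s Gen >> D -> measurable_fun (setT : set TG) Y -> (forall x, 0 <= Y x) ->
  \int[P]_(x in D `&` B) Y x = P B * \int[P]_(x in D) Y x.
Proof.
move=> GD mY Y0.
have mD : measurable D := hG _ GD.
have mYT : measurable_fun (setT : set T) Y.
  move=> _ A mA; rewrite setTI; apply: hG.
  by have := mY measurableT A mA; rewrite setTI.
rewrite -integral_mrestr //; last exact: measurable_funTS.
have E1 := @ge0_integral_pushforward _ _ T TG R id (mid hG) (mrestr P mB) D Y GD
  (measurable_funTS mY) (fun y _ => Y0 y).
rewrite preimage_id in E1.
rewrite -E1 (eq_measure_integral (subr B hG mB)) //; last exact: (mid hG).
have PB : P B = (fine (P B))%:E by rewrite fineK // fin_num_measure.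
have PB0 : (0 <= fine (P B))%R by rewrite fine_ge0 // measure_ge0.
rewrite (eq_measure_integral (mscale (NngNum PB0) (subr setT hG (@measurableT _ T)))); last first.
  move=> A mA _; change (P (A `&` B) = (fine (P B))%:E * P (A `&` setT)); rewrite setIT -PB.
  by rewrite (hB A mA) muleC.
rewrite ge0_integral_mscale //=; last exact: measurable_funTS.
rewrite -PB; congr (_ * _).
have E2 := @ge0_integral_pushforward _ _ T TG R id (mid hG) P D Y GD
  (measurable_funTS mY) (fun y _ => Y0 y).
rewrite preimage_id in E2.
rewrite -E2; apply: eq_measure_integral => [|? A mA _]; first exact: (mid hG).
by change (P (A `&` setT) = P (id @^-1` A)); rewrite setIT preimage_id.
Qed.

Lemma factorE (hG : <<s Gen >> `<=` measurable) (B : set T) (mB : measurable B)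
  (hB : forall C, <<s Gen >> C -> P (C `&` B) = P C * P B)
  (f : T -> R) (D : set T) :
  <<s Gen >> D -> measurable_wrt <<s Gen >> f -> P.-integrable setT (EFin \o f) ->
  \int[P]_(x in D `&` B) (f x)%:E = P B * \int[P]_(x in D) (f x)%:E.
Proof.
move=> GD mf intf.
have mD : measurable D := hG _ GD.
have mfG : measurable_fun (setT : set TG) (EFin \o f).
  by apply/measurable_EFinP => _ A mA; rewrite setTI; exact: mf.
have intD : P.-integrable D (EFin \o f) by apply: integrableS intf.
have F1 := @factor_ge0 hG B mB hB (fun x => (f x)%:E)^\+ D GD
  (measurable_funepos mfG) (funepos_ge0 _).
have F2 := @factor_ge0 hG B mB hB (fun x => (f x)%:E)^\- D GD
  (measurable_funeneg mfG) (funeneg_ge0 _).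
have PBf : P B \is a fin_num.
  exact: (fin_num_measure P B mB).
have L1 := integralE P (D `&` B) (fun x => (f x)%:E).
have L2 := integralE P D (fun x => (f x)%:E).
rewrite L1 L2 F1 F2.
have fn : \int[P]_(x in D) ((fun x => (f x)%:E)^\- x) \is a fin_num.
  exact: (integrable_fin_num mD (integrable_funeneg mD intD)).
rewrite [RHS]muleBr; [by []|exact: PBf|]. by apply: fin_num_adde_defl; rewrite fin_numN.
Qed.

End factorE.


Section single.
Context {d0 : measure_display} {T : measurableType d0} {R : realType}.
Variable P : probability T R.

Lemma natF_meas (X : R -> T -> R) (Xint : forall t, 0 <= t -> P.-integrable setT (EFin \o X t)) t :
  natF X t `<=` measurable.
Proof.
apply: gen_meas => s; rewrite /= in_itv /= => /andP[s0 _]; exact: int_mfun (Xint s s0).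
Qed.

Lemma procF_meas (X : R -> T -> R) (Xint : forall t, 0 <= t -> P.-integrable setT (EFin \o X t)) :
  procF X `<=` measurable.
Proof.
apply: gen_meas => s; rewrite /= in_itv /= andbT => s0; exact: int_mfun (Xint s s0).
Qed.

Local Open Scope ereal_scope.

Lemma single n (N : 'I_n -> R -> T -> R)
  (Nint : forall i t, (0 <= t)%R -> P.-integrable setT (EFin \o N i t)) :
  nparam_martingale P (fun t => sjoin (fun i => natF (N i) (t i)))
    (fun t w => (\sum_(i < n) N i (t i) w)%R) ->
  forall i, martingale1 P (natF (N i)) (N i).
Proof.
move=> [_ [_ mart]] i; split; first exact: Nint.
split; first by move=> t t0; exact: natF_adapted.
move=> s t s0 st A hA.
have t0 : (0 <= t)%R by apply: le_trans st.
pose sv := fun j : 'I_n => if j == i then s else 0%R.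
pose tv := fun j : 'I_n => if j == i then t else 0%R.
have ps : pos_param sv by move=> j; rewrite /sv; case: ifP.
have pt : pos_param tv by move=> j; rewrite /tv; case: ifP.
have cst : cwle sv tv by move=> j; rewrite /sv /tv; case: ifP.
have hAs : sjoin (fun j => natF (N j) (sv j)) A.
  by apply: sub_gen_smallest; exists i => //; rewrite /sv eqxx.
have := mart sv tv ps pt cst A hAs.
have mA : measurable A := natF_meas _ (Nint i) _ _ hA.
pose C := fun w => (\sum_(j < n | j != i) N j 0%R w)%R.
have intC : P.-integrable A (EFin \o C).
  apply: (integrableS measurableT mA (@subsetT _ A)).
  rewrite (_ : EFin \o C = fun w => \sum_(j < n | j != i) (N j 0%R w)%:E).
    by apply: (integrable_sum measurableT) => j _; exact: Nint.
  by apply/funext => w; rewrite /= sumEFin.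
have decomp (u : R) (uv : 'I_n -> R) : uv = (fun j => if j == i then u else 0%R) ->
  (fun w => (\sum_(j < n) N j (uv j) w)%:E) = (EFin \o N i u) \+ (EFin \o C).
  move=> ->; apply/funext => w; rewrite (bigD1 i) //= eqxx EFinD; congr (_ + _%:E).
  by apply: eq_bigr => j /negbTE ->.
rewrite /= (decomp t tv) // (decomp s sv) //.
have intA u : (0 <= u)%R -> P.-integrable A (EFin \o N i u).
  by move=> u0; apply: (integrableS measurableT mA (@subsetT _ A)); exact: Nint.
rewrite integralD_EFin //; last exact: intA.
rewrite integralD_EFin //; last exact: intA.
move=> E; have := congr1 (fun x => x - \int[P]_(x in A) (EFin \o C) x) E.
by rewrite !addeK //; exact: (integrable_fin_num mA intC).
Qed.

End single.


Section hard.
Context {d0 : measure_display} {T : measurableType d0} {R : realType}.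
Variable P : probability T R.
Local Open Scope ereal_scope.

Lemma int_compl (f : T -> R) A : measurable A -> P.-integrable setT (EFin \o f) ->
  \int[P]_(x in ~` A) (f x)%:E = \int[P]_(x in setT) (f x)%:E - \int[P]_(x in A) (f x)%:E.
Proof.
move=> mA intf.
have mf : measurable_fun setT (EFin \o f) := measurable_int P intf.
rewrite -(setUv A) integral_setU //; last 3 first.
  - exact: measurableC.
  - by rewrite setUv.
  - by apply/disj_set2P; rewrite setICr.
rewrite (addeC (\int[P]_(x in A) _)) addeK //.
exact: (integrable_fin_num mA (integrableS measurableT mA (@subsetT _ A) intf)).
Qed.

Lemma hard n (N : 'I_n -> R -> T -> R)
  (Nint : forall i t, (0 <= t)%R -> P.-integrable setT (EFin \o N i t))
  (Nind : indep_processes P N)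
  (Nm : forall i, martingale1 P (natF (N i)) (N i)) :
  nparam_martingale P (fun t => sjoin (fun i => natF (N i) (t i)))
    (fun t w => (\sum_(i < n) N i (t i) w)%R).
Proof.
have intX t : pos_param t -> P.-integrable setT (EFin \o (fun w => \sum_(i < n) N i (t i) w)%R).
  move=> t0; rewrite (_ : _ \o _ = fun w => \sum_(i < n) (N i (t i) w)%:E).
    by apply: (integrable_sum measurableT) => j _; exact: Nint.
  by apply/funext => w; rewrite /= sumEFin.
split; first exact: intX.
split.
  move=> t t0; apply: mwrt_sum => i B mB; apply: sub_gen_smallest; exists i => //.
  exact: natF_adapted.
move=> s t s0 t0 st A FA.
pose Xt := (fun w => \sum_(i < n) N i (t i) w)%R.
pose Xs := (fun w => \sum_(i < n) N i (s i) w)%R.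
pose H := [set A : set T | measurable A /\
  \int[P]_(w in A) (Xt w)%:E = \int[P]_(w in A) (Xs w)%:E].
pose Rect := [set A : set T | exists Af : 'I_n -> set T,
  (forall j, natF (N j) (s j) (Af j)) /\ A = \bigcap_(j in setT) Af j].
have RectI : setI_closed Rect.
  move=> A1 A2 [Af [hAf ->]] [Ag [hAg ->]].
  exists (fun j => Af j `&` Ag j); split; first by move=> j; exact: sigmaI (hAf j) (hAg j).
  apply/seteqP; split => x /=.
    by move=> [h1 h2] j _; exact: (conj (h1 j I) (h2 j I)).
  by move=> h; split => j _; have [] := h j I.
have RectH : Rect `<=` H.
  move=> _ [Af [hAf ->]].
  have mAf j : measurable (Af j) := @natF_meas _ _ _ P _ (Nint j) _ _ (hAf j).
  have mA : measurable (\bigcap_(j in setT) Af j).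
    by apply: fin_bigcap_measurable => //; exact: finite_finset.
  split => //.
  rewrite /Xt /Xs.
  under eq_integral do rewrite -sumEFin.
  under [RHS]eq_integral do rewrite -sumEFin.
  rewrite integral_sum //; last first.
    move=> j; apply: (integrableS measurableT mA (@subsetT _ _)); exact: Nint.
  rewrite integral_sum //; last first.
    move=> j; apply: (integrableS measurableT mA (@subsetT _ _)); exact: Nint.
  apply: eq_bigr => i _.
  pose B := \bigcap_(j in setT) (if j == i then setT else Af j).
  have AE : \bigcap_(j in setT) Af j = Af i `&` B.
    apply/seteqP; split => x /=.
      move=> h; split; first exact: h i I.
      by move=> j _; case: ifP => // _; exact: h j I.
    by move=> [hi hB] j _; have := hB j I; case: eqP => [-> _ //|//].
  have hG : procF (N i) `<=` measurable := @procF_meas _ _ _ P _ (Nint i).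
  have mB : measurable B.
    apply: fin_bigcap_measurable => //; first exact: finite_finset.
    by move=> j _; case: ifP.
  have hB : forall C, procF (N i) C -> P (C `&` B) = P C * P B.
    move=> C hC.
    have E1 := Nind (fun j => if j == i then C else Af j).
    have E2 := Nind (fun j => if j == i then setT else Af j).
    have CB : \bigcap_(j in setT) (if j == i then C else Af j) = C `&` B.
      apply/seteqP; split => x /=.
        move=> h; split; first by have := h i I; rewrite eqxx.
        by move=> j _; case: ifP => [//|ji]; have := h j I; rewrite ji.
      by move=> [hC' hB] j _; case: ifP => [_ //|ji]; have := hB j I; rewrite ji.
    rewrite -CB E1; last first.
      by move=> j /=; case: ifP => [/eqP ->|_]; [exact: hC|exact: (natF_procF _ _ _ (hAf j))].
    rewrite /B E2; last first.
      by move=> j /=; case: ifP => _; [exact: sigmaT|exact: (natF_procF _ _ _ (hAf j))].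
    rewrite (bigD1 i) //= eqxx [in RHS](bigD1 i) //= eqxx probability_setT mul1e.
    congr (_ * _); apply: eq_bigr => j /negbTE ->; by [].
  have mfr u : (0 <= u)%R -> measurable_wrt (procF (N i)) (N i u).
    move=> u0 Y mY; apply: sub_gen_smallest; exists u.
      by rewrite /= in_itv /= andbT.
    by exists Y => //; rewrite setTI.
  have GAf : procF (N i) (Af i) := natF_procF _ _ _ (hAf i).
  rewrite AE (@factorE _ _ _ P _ hG B mB hB (N i (t i)) (Af i) GAf (mfr _ (t0 i)) (Nint _ _ (t0 i))).
  rewrite (@factorE _ _ _ P _ hG B mB hB (N i (s i)) (Af i) GAf (mfr _ (s0 i)) (Nint _ _ (s0 i))).
  by rewrite ((Nm i).2.2 (s i) (t i) (s0 i) (st i) (Af i) (hAf i)).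
have lamH : lambda_system setT H.
  apply/dynkin_lambda_system; split.
  - apply: RectH; exists (fun _ => setT); split; first by move=> j; exact: sigmaT.
    by apply/seteqP; split.
  - move=> B [mB hB]; split; first exact: measurableC.
    rewrite !int_compl //; [|exact: intX|exact: intX].
    rewrite hB; congr (_ - _).
    have [_ ->] : H setT.
      apply: RectH; exists (fun _ => setT); split; first by move=> j; exact: sigmaT.
      by apply/seteqP; split.
    by [].
  - move=> F tF hF; split.
      by apply: bigcupT_measurable => k; have [] := hF k.
    have mF k : measurable (F k) by have [] := hF k.
    rewrite !integral_bigcup //; last 2 first.
    + by apply: (integrableS measurableT) => //; [exact: bigcupT_measurable|exact: intX].
    + by apply: (integrableS measurableT) => //; [exact: bigcupT_measurable|exact: intX].
    by apply: eq_eseriesr => k _; have [] := hF k.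
have FRect : sjoin (fun i => natF (N i) (s i)) `<=` <<s Rect >>.
  apply: smallest_sub; first exact: smallest_sigma_algebra.
  move=> B [j _ hB]; apply: sub_gen_smallest.
  exists (fun k => if k == j then B else setT); split.
    by move=> k; case: ifP => [/eqP -> //|_]; exact: sigmaT.
  apply/seteqP; split => x /=.
    by move=> Bx k _; case: ifP.
  by move=> h; have := h j I; rewrite eqxx.
have := lambda_system_subset RectI lamH RectH (fun _ _ => @subsetT _ _) (FRect _ FA).
by move=> [].
Qed.

End hard.


Lemma indep_sub {d0 : measure_display} {T : measurableType d0} {R : realType}
  (P : probability T R) d' d (h : (d' <= d)%N) (M : 'I_d -> R -> T -> R) :
  indep_processes P M -> indep_processes P (fun i => M (widen_ord h i)).
Proof.
move=> Mind A hA.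
pose B := fun j : 'I_d => if (insub (val j) : option 'I_d') is Some i then A i else setT.
have Bw i : B (widen_ord h i) = A i.
  rewrite /B; case: insubP => [u _ ui|].
    by have -> : u = i by apply: val_inj; rewrite ui.
  by rewrite /= ltn_ord.
have hB j : procF (M j) (B j).
  rewrite /B; case: insubP => [u _ uj|_]; last exact: sigmaT.
  have -> : j = widen_ord h u by apply: val_inj => /=; rewrite uj.
  exact: hA u.
have SE : \bigcap_(j in setT) B j = \bigcap_(i in setT) A i.
  apply/seteqP; split => x /= H.
    by move=> i _; rewrite -Bw; exact: H.
  by move=> j _; rewrite /B; case: insubP => [u _ _|_] //; exact: H u I.
have PE : (\prod_(j < d) P (B j) = \prod_(i < d') P (A i))%E.
  rewrite (bigID (fun j : 'I_d => (val j < d')%N)) /=.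
  rewrite [X in (_ * X)%E]big1 ?mule1; last first.
    move=> j /negbTE jd; rewrite /B; case: insubP => [u|_]; [by rewrite jd|exact: probability_setT].
  by rewrite (big_ord_narrow h); apply: eq_bigr => i _; rewrite Bw.
by rewrite -SE -PE; exact: Mind B hB.
Qed.


Theorem mainTheorem14 (d0 : measure_display) (T : measurableType d0)
  (R : realType) (P : probability T R) (d : nat)
  (M : 'I_d -> R -> T -> R)
  (Mint : forall i t, 0 <= t -> P.-integrable setT (EFin \o M i t))
  (Mind : indep_processes P M) :
  let F := fun t : 'I_d -> R => sjoin (fun i => natF (M i) (t i)) in
  [<-> (nparam_martingale P F (fun t w => \sum_(i < d) M i (t i) w) /\
        (forall i s t, 0 <= s -> 0 <= t ->
           (\int[P]_w (M i s w)%:E = \int[P]_w (M i t w)%:E)%E));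
       (forall (d' : nat) (h : (d' <= d)%N), (0 < d')%N ->
          nparam_martingale P
            (fun t : 'I_d' -> R => sjoin (fun i => natF (M (widen_ord h i)) (t i)))
            (fun t w => \sum_(i < d') M (widen_ord h i) (t i) w));
       (forall i, martingale1 P (natF (M i)) (M i))].
Proof.
move=> F; tfae.
- move=> [mart _] d' h d'0.
  have m1 := @single _ _ _ P d M Mint mart.
  apply: (@hard _ _ _ P d' (fun i => M (widen_ord h i))).
  + by move=> i t t0; exact: Mint.
  + exact: indep_sub.
  + by move=> i; exact: m1.
- move=> H i.
  have d0' : (0 < d)%N by apply: leq_ltn_trans (leq0n i) (ltn_ord i).
  have := @single _ _ _ P d (fun j => M (widen_ord (leqnn d) j)) (fun j => Mint _) (H d (leqnn d) d0') i.
  by rewrite (_ : widen_ord (leqnn d) i = i) //; apply: val_inj.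
- move=> H; split; first exact: (@hard _ _ _ P d M Mint Mind H).
  move=> i s t s0 t0.
  have key u v : 0 <= u -> u <= v -> (\int[P]_w (M i u w)%:E = \int[P]_w (M i v w)%:E)%E.
    by move=> u0 uv; rewrite ((H i).2.2 u v u0 uv setT (sigmaT _)).
  by have [st|/ltW ts] := leP s t; [exact: key|rewrite (key t s t0 ts)].
Qed.
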